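(* A C*-algebra $A$ possesses a quasi-identity if and only if $A$ is unital. In this case, the identity is the only quasi-identity of $A$.
   Context: A quasi-identity of a ring $R$ is an element $e\in R$ with $r=er+re-ere$ for all $r\in R$. *)

(* Defs.v *)
From HB Require Import structures.
From mathcomp Require Import all_boot all_order all_algebra.
From mathcomp Require Import complex.
From mathcomp Require Import all_classical all_reals all_analysis.
Set Implicit Arguments. Unset Strict Implicit. Unset Printing Implicit Defensive.
Import Order.TTheory GRing.Theory Num.Theory.
Local Open Scope ring_scope.
Local Open Scope complex_scope.

Record is_Cstar_algebra (R : realType) (A : completeNormedModType R[i])
    (mul : A -> A -> A) (star : A -> A) : Prop := {
  Cs_mulA : forall x y z, mul (mul x y) z = mul x (mul y z);
  Cs_mulDl : forall x y z, mul (x + y) z = mul x z + mul y z;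
  Cs_mulDr : forall x y z, mul x (y + z) = mul x y + mul x z;
  Cs_mulZl : forall (a : R[i]) x y, mul (a *: x) y = a *: mul x y;
  Cs_mulZr : forall (a : R[i]) x y, mul x (a *: y) = a *: mul x y;
  Cs_normM : forall x y, `|mul x y| <= `|x| * `|y|;
  Cs_starD : forall x y, star (x + y) = star x + star y;
  Cs_starZ : forall (a : R[i]) x, star (a *: x) = a^* *: star x;
  Cs_starK : forall x, star (star x) = x;
  Cs_starM : forall x y, star (mul x y) = mul (star y) (star x);
  Cs_Cstar : forall x, `|mul (star x) x| = `|x| ^+ 2
}.

Definition quasi_identity (A : zmodType) (mul : A -> A -> A) (e : A) : Prop :=
  forall r, r = mul e r + mul r e - mul (mul e r) e.

Definition is_identity (A : Type) (mul : A -> A -> A) (u : A) : Prop :=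
  forall r, mul u r = r /\ mul r u = r.

Definition unital (A : Type) (mul : A -> A -> A) : Prop :=
  exists u, is_identity mul u.

(* Main.v *)
Require Import Defs.
From HB Require Import structures.
From mathcomp Require Import all_boot all_order all_algebra.
From mathcomp Require Import complex.
From mathcomp Require Import all_classical all_reals all_analysis.
Import Order.TTheory GRing.Theory Num.Theory.
Local Open Scope ring_scope.
Local Open Scope complex_scope.

Section Aux.
Variables (R : realType) (A : completeNormedModType R[i])
    (mul : A -> A -> A) (star : A -> A)
    (HA : is_Cstar_algebra mul star).

Lemma m0r x : mul 0 x = 0.
Proof.
have := Cs_mulDl HA 0 0 x; rewrite addr0.
by move/(congr1 (fun t => t - mul 0 x)); rewrite subrr addrK.
Qed.
Lemma mr0 x : mul x 0 = 0.
Proof.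
have := Cs_mulDr HA x 0 0; rewrite addr0.
by move/(congr1 (fun t => t - mul x 0)); rewrite subrr addrK.
Qed.
Lemma mNr x y : mul (- x) y = - mul x y.
Proof.
apply/eqP; rewrite -subr_eq0 opprK -(Cs_mulDl HA) addNr; exact/eqP/m0r.
Qed.
Lemma mrN x y : mul x (- y) = - mul x y.
Proof.
apply/eqP; rewrite -subr_eq0 opprK -(Cs_mulDr HA) addNr; exact/eqP/mr0.
Qed.
Lemma mBl x y z : mul (x - y) z = mul x z - mul y z.
Proof. by rewrite (Cs_mulDl HA) mNr. Qed.
Lemma mBr x y z : mul z (x - y) = mul z x - mul z y.
Proof. by rewrite (Cs_mulDr HA) mrN. Qed.

Lemma zero_of x : (forall y, mul (mul x y) x = 0) -> x = 0.
Proof.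
move=> H.
have h1 : mul (star (mul (star x) x)) (mul (star x) x) = 0.
  rewrite (Cs_starM HA) (Cs_starK HA) (Cs_mulA HA) -(Cs_mulA HA x).
  by rewrite H mr0.
have h2 : mul (star x) x = 0.
  apply/normr0_eq0; have := Cs_Cstar HA (mul (star x) x).
  rewrite h1 normr0 => /esym/eqP; rewrite sqrf_eq0 => /eqP //.
apply/normr0_eq0; have := Cs_Cstar HA x.
by rewrite h2 normr0 => /esym/eqP; rewrite sqrf_eq0 => /eqP.
Qed.

Lemma qi_id e : quasi_identity mul e -> is_identity mul e.
Proof.
move=> Q.
have Q0 w : w - mul w e - mul e w + mul (mul e w) e = 0.
  rewrite {1}(Q w); move: (mul e w) (mul w e) (mul (mul e w) e) => p q r.
  by rewrite (addrAC p) addrK (addrAC p) subrr add0r addNr.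
move=> a; split.
  apply/eqP; rewrite eq_sym -subr_eq0; apply/eqP/zero_of => y.
  have -> : mul (mul (a - mul e a) y) (a - mul e a)
      = mul (mul a y - mul (mul a y) e - mul e (mul a y)
             + mul (mul e (mul a y)) e) a.
    rewrite !(mBl, mBr, Cs_mulDl HA, mNr, mrN) !(Cs_mulA HA).
    by rewrite opprB addrA addrAC.
  by rewrite Q0 m0r.
apply/eqP; rewrite eq_sym -subr_eq0; apply/eqP/zero_of => y.
have -> : mul (mul (a - mul a e) y) (a - mul a e)
    = mul a (mul y a - mul (mul y a) e - mul e (mul y a)
           + mul (mul e (mul y a)) e).
  rewrite !(mBl, mBr, Cs_mulDr HA, Cs_mulDl HA, mNr, mrN) !(Cs_mulA HA).
  by rewrite opprK addrA; congr (_ + _); exact: addrAC.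
by rewrite Q0 mr0.
Qed.
End Aux.

Theorem proposition4p5 (R : realType) (A : completeNormedModType R[i])
    (mul : A -> A -> A) (star : A -> A)
    (HA : is_Cstar_algebra mul star) :
  ((exists e : A, quasi_identity mul e) <-> unital mul) /\
  (forall u : A, is_identity mul u ->
     forall e : A, quasi_identity mul e -> e = u).
Proof.
split.
  split; first by case=> e /(@qi_id _ _ _ _ HA) He; exists e.
  case=> u Hu; exists u => r; have [h1 h2] := Hu r.
  by rewrite h1 h2 addrK.
move=> u Hu e /(@qi_id _ _ _ _ HA) He.
by have [_ <-] := Hu e; have [-> _] := He u.
Qed.
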